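(* Let $n\geq 6$ be even, let $k=\frac{n-2}{2}$, and let $u$ be the vertex of the friendship graph $F_k$ that is adjacent to every other vertex. Let $F_k^{u}$ be the graph obtained from $F_k$ by adding a new vertex joined by a pendant edge to $u$. Then $\rho(F^{u}_{\frac{n-2}{2}})<\sqrt{2n-4}$.
   Context: All graphs are simple and undirected. The friendship graph $F_k$ is the graph consisting of $k$ edge-disjoint triangles that all share a single common vertex. For a graph $G$ and a vertex $a$, $G^{a}$ denotes the graph obtained from $G$ by adding a new vertex and a pendant edge joining it to $a$. $\rho(G)$ denotes the spectral radius (largest adjacency eigenvalue) of $G$. *)

(* Defs.v *)
From HB Require Import structures.
From mathcomp Require Import all_boot all_order all_algebra.
From mathcomp Require Import reals.
Set Implicit Arguments. Unset Strict Implicit. Unset Printing Implicit Defensive.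
Import Order.TTheory GRing.Theory Num.Theory.
Local Open Scope ring_scope.

(* A simple graph on vertex set 'I_m is given by an adjacency relation
   (assumed/checked symmetric and irreflexive where used). *)

Definition adjmx (R : nzRingType) (m : nat) (e : rel 'I_m) : 'M[R]_m :=
  \matrix_(i, j) (e i j)%:R.

Definition spectral_radius (R : realType) (m : nat) (e : rel 'I_m) : R :=
  reals.sup (fun a : R => is_true (eigenvalue (adjmx R e) a)).

(* Friendship graph F_k on 'I_(2k+1): vertex 0 is the centre u,
   and for i = 0..k-1 the vertices 2i+1, 2i+2 together with 0 form a triangle. *)
Definition friendship (k : nat) : rel 'I_(k.*2.+1) :=
  fun x y => (x != y) &&
    [|| (val x == 0%N), (val y == 0%N) | ((val x).-1./2 == (val y).-1./2)].

Definition friend_center (k : nat) : 'I_(k.*2.+1) := ord0.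

Definition pendant (m : nat) (e : rel 'I_m) (a : 'I_m) : rel 'I_m.+1 :=
  fun x y =>
    match unlift ord_max x, unlift ord_max y with
    | Some x', Some y' => e x' y'
    | Some x', None => x' == a
    | None, Some y' => y' == a
    | None, None => false
    end.
Arguments friend_center k : clear implicits.
Arguments friendship k : clear implicits.

(* Main.v *)
Require Import Defs.
From HB Require Import structures.
From mathcomp Require Import all_boot all_order all_algebra.
From mathcomp Require Import reals zify ring lra.
Import Order.TTheory GRing.Theory Num.Theory.
Local Open Scope ring_scope.

Definition adj (k : nat) (X Y : nat) : bool :=
  if X == k.*2.+1 then Y == 0%N else if Y == k.*2.+1 then X == 0%N else
  (X != Y) && [|| X == 0%N, Y == 0%N | X.-1./2 == Y.-1./2].

Definition partner (J : nat) : nat := if odd J then J.+1 else J.-1.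

Lemma halfeq (X J : nat) : (0 < X)%N -> (0 < J)%N -> X != J ->
  ((X.-1)./2 == (J.-1)./2) = (X == partner J).
Proof.
move=> hX hJ hXJ.
rewrite /partner -!divn2.
have := modn2 J.
case: (odd J) => hm; apply/eqP/eqP; lia.
Qed.

Lemma partner_facts k J : (0 < J <= k.*2)%N ->
  [/\ (0 < partner J <= k.*2)%N, partner (partner J) = J & partner J != J].
Proof.
rewrite /partner -!muln2 => hJ.
case hJo: (odd J).
- have hm : (J %% 2 = 1)%N by rewrite modn2 hJo.
  rewrite /= hJo /=; split; try lia; apply/eqP; lia.
- case: J hJ hJo => [|J'] // hJ hJo.
  have hJo' : odd J' by move: hJo => /= /negbFE.
  have hm : (J' %% 2 = 1)%N by rewrite modn2 hJo'.
  rewrite /= hJo'; split; try lia; apply/eqP; lia.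
Qed.

Lemma adj_tri k X J : (X < k.*2.+2)%N -> (0 < J <= k.*2)%N ->
  adj k X J = (X == 0%N) || (X == partner J).
Proof.
move=> hX hJ; have [hP1 _ hP3] := partner_facts _ _ hJ.
rewrite /adj.
have -> : (J == k.*2.+1) = false by apply/eqP; lia.
have -> : (J == 0%N) = false by apply/eqP; lia.
case: (eqVneq X k.*2.+1) => [->|h1] /=.
  by apply/esym/eqP; lia.
case: (eqVneq X 0%N) => [->|h0] /=.
  by rewrite andbT; apply/eqP; lia.
case: (eqVneq X J) => [->|hXJ] /=.
  by rewrite eq_sym (negbTE hP3).
by rewrite halfeq //; lia.
Qed.
Lemma eE k (x y : 'I_(k.*2.+2)) :
  pendant (friendship k) (friend_center k) x y = adj k x y.
Proof.
rewrite /pendant /adj.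
case: unliftP => [x'|] ->; case: unliftP => [y'|] -> /=.
- have hx : (x' < k.*2.+1)%N := ltn_ord x'; have hy : (y' < k.*2.+1)%N := ltn_ord y'.
  have bx : bump k.*2.+1 x' = x' by rewrite /bump leqNgt hx.
  have by' : bump k.*2.+1 y' = y' by rewrite /bump leqNgt hy.
  rewrite bx by'.
  rewrite ifN; last by rewrite neq_ltn hx.
  rewrite ifN; last by rewrite neq_ltn hy.
  done.
- have hx : (x' < k.*2.+1)%N := ltn_ord x'.
  have bx : bump k.*2.+1 x' = x' by rewrite /bump leqNgt hx.
  rewrite bx eqxx ifN //; last by rewrite neq_ltn hx.
- have hy : (y' < k.*2.+1)%N := ltn_ord y'.
  have by' : bump k.*2.+1 y' = y' by rewrite /bump leqNgt hy.
  by rewrite by' eqxx.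
- by rewrite eqxx.
Qed.

Lemma sum1 (R : nzRingType) n (F : 'I_n -> R) i0 :
  (forall i, i != i0 -> F i = 0) -> \sum_i F i = F i0.
Proof. by move=> H; rewrite (bigD1 i0) //= big1 ?addr0. Qed.

Lemma sum2 (R : nzRingType) n (F : 'I_n -> R) i0 i1 : i1 != i0 ->
  (forall i, i != i0 -> i != i1 -> F i = 0) -> \sum_i F i = F i0 + F i1.
Proof.
move=> h10 H; rewrite (bigD1 i0) //= (bigD1 i1) //= big1 ?addr0 //.
by move=> i /andP[hi1 hi0]; apply: H.
Qed.

Lemma sumG (R : nzRingType) k (X Y : R) :
  \sum_(i < k.*2.+2) (if val i == 0%N then 0 else if val i == k.*2.+1 then X else Y)
  = Y *+ k.*2 + X.
Proof.
rewrite big_ord_recr big_ord_recl /= eqxx add0r.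
congr (_ + _).
  rewrite (eq_bigr (fun _ => Y)) ?sumr_const ?card_ord //.
  move=> i _ /=; rewrite /bump /= add1n ifN //; apply/eqP => hh; move: (ltn_ord i); lia.
Qed.

Lemma eig_eq (R : realType) k a : (2 <= k)%N ->
  eigenvalue (adjmx R (pendant (friendship k) (friend_center k))) a ->
  [\/ a = 0, a = 1, a = -1 | a ^+ 3 - a ^+ 2 - (k.*2.+1)%:R * a + 1 = 0].
Proof.
move=> hk /eigenvalueP [v Hv v0].
have E : forall j : 'I_(k.*2.+2), a * v 0 j = \sum_i v 0 i * (adj k i j)%:R.
  move=> j; move/rowP: (Hv) => /(_ j); rewrite !mxE => <-.
  by apply: eq_bigr => i _; rewrite !mxE eE.
have [->|a0] := eqVneq a 0; first by constructor 1.
have [->|a1] := eqVneq a 1; first by constructor 2.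
have [->|a2] := eqVneq a (-1); first by constructor 3.
constructor 4.
set c := v 0 ord0.
have hP : a * v 0 ord_max = c.
  rewrite E (@sum1 _ _ _ ord0) /adj /= ?eqxx ?mulr1 //.
  move=> i hi; case: ifP => _ /=; first by rewrite mulr0.
  have -> : (val i == 0%N) = false by apply/negbTE.
  by rewrite mulr0.
have hT : forall j : 'I_(k.*2.+2), (0 < j <= k.*2)%N ->
    a * v 0 j = c + v 0 (inord (partner j)).
  move=> j hj; have [hP1 hP2 hP3] := partner_facts _ _ hj.
  have hPv : val (inord (partner j) : 'I_(k.*2.+2)) = partner j.
    by apply: inordK; lia.
  rewrite E (@sum2 _ _ _ ord0 (inord (partner j))).
  - rewrite !adj_tri // hPv /= eqxx orbT !mulr1 //.
  - by apply/eqP => /(congr1 val); rewrite hPv /=; lia.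
  move=> i hi0 hiP; rewrite adj_tri //.
  have -> : (val i == 0%N) = false by apply/negbTE.
  have -> : (val i == partner j) = false.
    apply/negbTE/eqP => hh; move/eqP: hiP; apply; apply/val_inj; by rewrite hPv.
  by rewrite mulr0.
have hT2 : forall j : 'I_(k.*2.+2), (0 < j <= k.*2)%N -> (a - 1) * v 0 j = c.
  move=> j hj; have [hP1 hP2 _] := partner_facts _ _ hj.
  have hPv : val (inord (partner j) : 'I_(k.*2.+2)) = partner j.
    by apply: inordK; lia.
  have h1 := hT j hj.
  have h2 := hT (inord (partner j)) (ltac:(by rewrite hPv)).
  rewrite hPv hP2 inord_val in h2.
  move: h1 h2; set x := v 0 j; set y := v 0 (inord (partner j)) => h1 h2.
  have : (a + 1) * ((a - 1) * x - c) = 0.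
    rewrite (_ : (a+1)*((a-1)*x - c) = a*(a*x - c - y) + (a*y - c - x)); last by ring.
    by rewrite h1 h2; ring.
  move/eqP; rewrite mulf_eq0 => /orP[]; first by rewrite addr_eq0 (negbTE a2).
  by rewrite subr_eq0 => /eqP.
have hC : a * (a - 1) * (a * c) = (a * c) *+ k.*2 + (a - 1) * c.
  rewrite {1}E mulr_sumr -sumG; apply: eq_bigr => i _.
  case: (eqVneq (val i) 0%N) => [hi0|hi0].
    by rewrite /adj hi0 /= !mulr0.
  case: (eqVneq (val i) k.*2.+1) => [hi1|hi1].
    have -> : i = ord_max by apply/val_inj.
    rewrite /adj /= eqxx /= ?mulr1n mulr1 -hP; ring.
  have hj : (0 < i <= k.*2)%N by move: (ltn_ord i) hi0 hi1; change (\val i) with (nat_of_ord i); lia.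
  have -> : adj k i 0 = true by rewrite /adj (negbTE hi1) /= ?orbT ?andbT.
  rewrite /= ?mulr1n mulr1 -(hT2 i hj); ring.
have hc : c != 0.
  apply: contraNneq v0 => c0; apply/eqP/rowP => j; rewrite !mxE.
  case: (eqVneq (val j) 0%N) => [hi0|hi0].
    by rewrite -c0 /c; congr (v 0 _); apply/val_inj.
  case: (eqVneq (val j) k.*2.+1) => [hi1|hi1].
    have -> : j = ord_max by apply/val_inj.
    apply/eqP; have : a * v 0 ord_max == 0 by rewrite hP c0.
    by rewrite mulf_eq0 (negbTE a0).
  have hj : (0 < j <= k.*2)%N by move: (ltn_ord j) hi0 hi1; change (\val j) with (nat_of_ord j); lia.
  have := hT2 j hj; rewrite c0 => /eqP; rewrite mulf_eq0 subr_eq0 (negbTE a1) /=.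
  by move/eqP.
have : c * (a ^+ 3 - a ^+ 2 - (k.*2.+1)%:R * a + 1) = 0.
  rewrite (_ : (k.*2.+1)%:R = k.*2%:R + 1 :> R); last by rewrite mulrSr.
  rewrite -mulr_natr; move: hC; rewrite -mulr_natr => hC.
  rewrite (_ : c * _ = a * (a - 1) * (a * c) - ((a * c) * k.*2%:R + (a - 1) * c)); last by ring.
  by rewrite hC subrr.
by move/eqP; rewrite mulf_eq0 (negbTE hc) /= => /eqP.
Qed.

Lemma keyT (R : realType) (S K : R) : 0 <= S -> S ^+ 2 = 4 * K -> 2 <= K ->
  1 <= S - 1/100 /\ 2 * K + 1 <= (S - 1/100) ^+ 2 - (S - 1/100).
Proof.
move=> S0 SK K2; split; first by nra.
nra.
Qed.

Lemma eig_le (R : realType) k a : (2 <= k)%N ->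
  eigenvalue (adjmx R (pendant (friendship k) (friend_center k))) a ->
  a <= Num.sqrt (4 * k%:R) - 1/100.
Proof.
move=> hk ha.
set S := Num.sqrt (4 * k%:R : R).
have S0 : 0 <= S by apply: sqrtr_ge0.
have K2 : 2 <= k%:R :> R by rewrite ler_nat.
have SK : S ^+ 2 = 4 * k%:R by rewrite sqr_sqrtr //; nra.
have [T1 T2] := keyT _ _ _ S0 SK K2.
have ek : (k.*2.+1)%:R = 2 * k%:R + 1 :> R by rewrite -muln2 mulrSr natrM mulrC.
case: (eig_eq _ _ _ hk ha) => [->|->|->|]; try lra.
rewrite ek => hf.
rewrite leNgt; apply/negP => hlt.
set T := S - 1/100 in T1 T2 hlt.
have h1 : T ^+ 2 - T <= a ^+ 2 - a by nra.
nra.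
Qed.

Theorem lemma2p5 (R : realType) (n : nat) :
  (6 <= n)%N -> ~~ odd n ->
  let k := ((n - 2)./2)%N in
  spectral_radius R (pendant (friendship k) (friend_center k))
    < Num.sqrt ((2 * n - 4)%N%:R : R).
Proof.
move=> h6 hev; cbv zeta; set k := ((n - 2)./2)%N.
have hk : (2 <= k)%N by rewrite /k -divn2; lia.
have e4 : (2 * n - 4 = 4 * k)%N.
  have := modn2 n; rewrite (negbTE hev) => hm.
  by rewrite /k -divn2; lia.
rewrite e4 natrM.
have S0 : 0 <= Num.sqrt (4%:R * k%:R : R) by apply: sqrtr_ge0.
have K2 : 2 <= k%:R :> R by rewrite ler_nat.
have SK : Num.sqrt (4%:R * k%:R : R) ^+ 2 = 4 * k%:R by rewrite sqr_sqrtr //; nra.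
have [T1 _] := keyT _ _ _ S0 SK K2.
rewrite /spectral_radius.
set E := (fun a : R => _).
have [[x Ex]|nE] := boolp.pselect (exists x, E x).
  apply: (le_lt_trans (y := Num.sqrt (4%:R * k%:R : R) - 1/100)); last lra.
  apply: ge_sup; first by exists x.
  by move=> y Ey; apply: (eig_le _ _ _ hk).
rewrite sup_out; first lra.
by case => [[x Ex] _]; apply: nE; exists x.
Qed.
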